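(* For every $N\ge1$, the $\mathbb Q$-vector space $\mathcal{ZF}_N$ (taken over $\Bbbk=\mathbb Q$) has dimension $N-\lfloor N/2\rfloor=\lceil N/2\rceil$.
   Context: $\mathcal F_N$ is the free $\Bbbk$-module on symbols $F^{l,m,k}$, $l,m,k\ge0$, $l+m+k+1=N$; $\mathcal{ZF}_N:=\mathcal F_N/I$ with $I$ generated by all $F^{l,m,k}-F^{m,l,k}$ and all $F^{l,m+1,k}+F^{l+1,m,k}-F^{l,m,k+1}$. *)

(* Defs.v *)
From HB Require Import structures.
From mathcomp Require Import all_boot all_order all_algebra.
Set Implicit Arguments. Unset Strict Implicit. Unset Printing Implicit Defensive.
Import GRing.Theory.
Local Open Scope ring_scope.

Definition idxF (N : nat) :=
  {t : 'I_N * 'I_N * 'I_N | ((t.1.1 + t.1.2 + t.2).+1 == N)%N}.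

Definition FN (N : nat) := {ffun idxF N -> rat^o}.

(* The basis vector F^{l,m,k} (it is 0 when l+m+k+1 <> N, i.e. when the
   symbol does not exist; all generators below only use existing symbols). *)
Definition Fsym (N l m k : nat) : FN N :=
  [ffun x : idxF N => ((((val x).1.1 : nat) == l) && (((val x).1.2 : nat) == m)
                      && (((val x).2 : nat) == k))%:R].

Definition triples (s : nat) : seq (nat * nat * nat) :=
  [seq (l, m, s - l - m)%N | l <- iota 0 s.+1, m <- iota 0 (s - l).+1].

Definition gens_sym (N : nat) : seq (FN N) :=
  [seq Fsym N t.1.1 t.1.2 t.2 - Fsym N t.1.2 t.1.1 t.2 | t <- triples N.-1].

Definition gens_rel (N : nat) : seq (FN N) :=
  [seq Fsym N t.1.1 t.1.2.+1 t.2 + Fsym N t.1.1.+1 t.1.2 t.2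
       - Fsym N t.1.1 t.1.2 t.2.+1 | t <- triples N.-2].

Definition IN (N : nat) : {vspace FN N} := <<gens_sym N ++ gens_rel N>>%VS.

(* dim (F_N / I) = dim F_N - dim I. *)
Definition dimZF (N : nat) : nat := (\dim (fullv : {vspace FN N}) - \dim (IN N))%N.

(* Main.v *)
From HB Require Import structures.
Require Import Defs.
From mathcomp Require Import all_boot all_order all_algebra.
From mathcomp Require Import zify.
Set Implicit Arguments. Unset Strict Implicit. Unset Printing Implicit Defensive.
Import GRing.Theory.
Local Open Scope ring_scope.

Definition gb (k l j : nat) : nat := if (l <= j)%N then 'C(k, j - l) else 0%N.

Lemma gbP k l j : (gb k l j + gb k l.+1 j = gb k.+1 l j)%N.
Proof.
rewrite /gb; case: (ltngtP l j) => h /=.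
- have -> : (j - l = (j - l.+1).+1)%N by lia.
  by rewrite binS addnC.
- by [].
- by subst; rewrite subnn !bin0.
Qed.

Section S.
Variable N : nat.
Let c := (N - N./2)%N.

Definition pvf (l m k : nat) : 'rV[rat]_c := \row_(j < c) ((gb k l j + gb k m j)%N%:R).
Definition pv (x : idxF N) := pvf (val x).1.1 (val x).1.2 (val x).2.
Definition phif (f : FN N) : 'rV[rat]_c := \sum_x f x *: pv x.

Lemma phif_linear : linear phif.
Proof.
move=> a f g; rewrite /phif scaler_sumr -big_split /=; apply: eq_bigr => x _.
by rewrite !ffunE scalerDl scalerA.
Qed.
HB.instance Definition _ := GRing.isSemilinear.Build rat _ _ _ phif
  (GRing.semilinear_linear phif_linear).

Definition phi : 'Hom(FN N, 'rV[rat]_c) := linfun phif.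

Lemma key (x y : idxF N) :
  ((((val y).1.1 : nat) == (val x).1.1) && (((val y).1.2 : nat) == (val x).1.2)
   && (((val y).2 : nat) == (val x).2)) = (y == x).
Proof.
apply/idP/eqP => [|->]; last by rewrite !eqxx.
move=> /andP [/andP [/eqP h1 /eqP h2] /eqP h3]; apply: val_inj.
move: h1 h2 h3; case: (val y) => [[a b] d]; case: (val x) => [[a' b'] d'] /=.
by move=> /ord_inj -> /ord_inj -> /ord_inj ->.
Qed.

Lemma idx_ex l m k : ((l + m + k).+1 = N)%N ->
  exists x : idxF N, [/\ ((val x).1.1 : nat) = l, ((val x).1.2 : nat) = m & ((val x).2 : nat) = k].
Proof.
move=> h.
have hl : (l < N)%N by lia. have hm : (m < N)%N by lia. have hk : (k < N)%N by lia.
have hx : ((Ordinal hl, Ordinal hm, Ordinal hk).1.1 + (Ordinal hl, Ordinal hm, Ordinal hk).1.2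
    + (Ordinal hl, Ordinal hm, Ordinal hk).2).+1 == N by rewrite /= h.
by exists (exist (fun t : 'I_N * 'I_N * 'I_N => ((t.1.1 + t.1.2 + t.2).+1 == N)%N) (Ordinal hl, Ordinal hm, Ordinal hk) hx).
Qed.

Lemma Fsym_delta (x : idxF N) :
  Fsym N (val x).1.1 (val x).1.2 (val x).2 = [ffun y => (y == x)%:R].
Proof.
apply/ffunP => y; have := key x y; rewrite /Fsym !ffunE => ->.
by case: (y == x).
Qed.

Lemma Fsym0 l m k : ((l + m + k).+1 != N)%N -> Fsym N l m k = 0.
Proof.
move=> h; apply/ffunP => y; rewrite /Fsym !ffunE.
case: y => [[[a b] d] /= /eqP hy].
case E: (_ && _ && _) => //; move/andP: E => [/andP [/eqP ha /eqP hb] /eqP hd].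
by move: h; rewrite -hy ha hb hd eqxx.
Qed.

Lemma phi_delta (x : idxF N) : phi [ffun y => (y == x)%:R] = pv x.
Proof.
rewrite lfunE /= /phif (bigD1 x) //= ffunE eqxx scale1r big1 ?addr0 // => y.
by rewrite ffunE => /negbTE ->; rewrite scale0r.
Qed.

Lemma phi_Fsym l m k : phi (Fsym N l m k) = if ((l + m + k).+1 == N)%N then pvf l m k else 0.
Proof.
case: eqP => h; last by rewrite Fsym0 ?linear0 //; apply/eqP.
have [x [<- <- <-]] := idx_ex h.
by rewrite Fsym_delta phi_delta.
Qed.


Lemma triplesP s t : t \in triples s -> (t.1.1 + t.1.2 + t.2)%N = s.
Proof.
case/allpairsPdep => l [m [hl hm ->]] /=.
move: hl hm; rewrite !mem_iota /=; lia.
Qed.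

Lemma mem_triples s l m k : (l + m + k)%N = s -> (l, m, k) \in triples s.
Proof.
move=> h; apply/allpairsPdep; exists l, m; rewrite !mem_iota /=.
split; [lia | lia | congr (_, _, _); lia].
Qed.

Lemma pvf_sym l m k : pvf l m k = pvf m l k.
Proof. by apply/rowP => j; rewrite !mxE addnC. Qed.

Lemma pvf_rel l m k : pvf l m.+1 k + pvf l.+1 m k = pvf l m k.+1.
Proof.
apply/rowP => j; rewrite !mxE -natrD; congr _%:R; rewrite -!gbP; lia.
Qed.

Lemma IN_ker : (IN N <= lker phi)%VS.
Proof.
apply/span_subvP => v; rewrite mem_cat => /orP [] /mapP [t /triplesP ht ->];
  rewrite memv_ker ?linearB ?linearD /= !phi_Fsym.
- rewrite [(t.1.2 + t.1.1)%N]addnC pvf_sym; case: ifP => _; by rewrite subrr.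
- rewrite !addnS !addSn; case: ifP => _; last by rewrite !addr0 subrr.
  by rewrite pvf_rel subrr.
Qed.


Lemma gb0 l i : gb 0 l i = (l == i) :> nat.
Proof.
rewrite /gb bin0n; case: (ltngtP l i) => h //=.
- by rewrite subn_eq0 leqNgt h.
- by rewrite h subnn.
Qed.

Lemma phi_vj (j : 'I_c) : (1 <= N)%N ->
  phi (Fsym N j (N.-1 - j) 0) = ((1 + (N.-1 - j == j))%N%:R) *: delta_mx 0 j.
Proof.
move=> hN.
have hj := ltn_ord j; have hh := odd_double_half N.
rewrite -muln2 in hh.
have ho : (odd N <= 1)%N by case: (odd N).
have hc : c = (N - N./2)%N by [].
rewrite phi_Fsym ifT; last by apply/eqP; lia.
apply/rowP => i; rewrite !mxE gb0 gb0 -natrM; congr _%:R.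
have hi := ltn_ord i.
case: (i =P j) => [->|/eqP ne]; first by rewrite eqxx /= muln1 addnC.
move: ne; rewrite -val_eqE /= muln0.
case: eqP; case: eqP; move=> *; lia.
Qed.

Lemma limg_phi : (1 <= N)%N -> limg phi = fullv.
Proof.
move=> hN; apply/eqP; rewrite eqEsubv subvf /=; apply/subvP => w _.
rewrite (row_sum_delta w); apply: memv_suml => j _; apply: memvZ.
have -> : delta_mx 0 j = ((1 + (N.-1 - j == j))%N%:R)^-1 *: phi (Fsym N j (N.-1 - j) 0).
  by rewrite phi_vj // scalerA mulVf ?scale1r // Num.Theory.pnatr_eq0.
by apply: memvZ; apply: memv_img; apply: memvf.
Qed.

Lemma dim_lower : (1 <= N)%N -> (\dim (IN N) + c <= \dim (fullv : {vspace FN N}))%N.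
Proof.
move=> hN.
have := limg_ker_dim phi fullv; rewrite capfv.
rewrite -/(limg phi) limg_phi // dimvf dim_matrix => <-.
by rewrite -[X in (_ <= _ + X)%N]/(1 * c)%N mul1n leq_add2r dimvS // IN_ker.
Qed.


Definition Bs : seq (FN N) := [seq Fsym N j (N.-1 - j) 0 | j <- iota 0 c].

Lemma span_all : (1 <= N)%N -> forall k l m, (l + m + k)%N = N.-1 ->
  Fsym N l m k \in (IN N + <<Bs>>)%VS.
Proof.
move=> hN; have hh := odd_double_half N; rewrite -muln2 in hh.
have ho : (odd N <= 1)%N by case: (odd N).
have hc : c = (N - N./2)%N by [].
have inB j : (j < c)%N -> Fsym N j (N.-1 - j) 0 \in (IN N + <<Bs>>)%VS.
  move=> hj; apply: (subvP (addvSr _ _)); apply: memv_span.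
  by apply/mapP; exists j; rewrite ?mem_iota.
have inI v : v \in gens_sym N ++ gens_rel N -> v \in (IN N + <<Bs>>)%VS.
  by move=> hv; apply: (subvP (addvSl _ _)); apply: memv_span.
elim=> [|k IH] l m h.
- case: (ltnP l c) => hl.
    have -> : m = (N.-1 - l)%N by lia.
    by apply: inB.
  have -> : Fsym N l m 0 = (Fsym N l m 0 - Fsym N m l 0) + Fsym N m l 0 by rewrite subrK.
  apply: memvD.
    apply: inI; rewrite mem_cat /gens_sym; apply/orP; left.
    apply: (map_f (fun t : nat * nat * nat => Fsym N t.1.1 t.1.2 t.2 - Fsym N t.1.2 t.1.1 t.2) (x := (l, m, 0%N))).
    by apply: mem_triples; lia.
  have -> : l = (N.-1 - m)%N by lia.
  by apply: inB; lia.
- have -> : Fsym N l m k.+1 = Fsym N l m.+1 k + Fsym N l.+1 m k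
     - (Fsym N l m.+1 k + Fsym N l.+1 m k - Fsym N l m k.+1) by rewrite opprB addrC subrK.
  apply: memvB; first by apply: memvD; apply: IH; lia.
  apply: inI; rewrite mem_cat /gens_rel; apply/orP; right.
  apply: (map_f (fun t : nat * nat * nat => Fsym N t.1.1 t.1.2.+1 t.2 + Fsym N t.1.1.+1 t.1.2 t.2
       - Fsym N t.1.1 t.1.2 t.2.+1) (x := (l, m, k))).
  by apply: mem_triples; lia.
Qed.

Lemma dim_upper : (1 <= N)%N -> (\dim (fullv : {vspace FN N}) <= \dim (IN N) + c)%N.
Proof.
move=> hN.
have sub : (fullv <= IN N + <<Bs>>)%VS.
  apply/subvP => f _.
  have -> : f = \sum_x f x *: Fsym N (val x).1.1 (val x).1.2 (val x).2.
    apply/ffunP => y; rewrite sum_ffunE (bigD1 y) //= big1 => [|x nx];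
      rewrite ffunE Fsym_delta ffunE.
      by rewrite eqxx addr0 /GRing.scale /= mulr1.
    by rewrite eq_sym (negbTE nx) scaler0.
  apply: memv_suml => x _; apply: memvZ; apply: span_all => //.
  move: (valP x) => /= /eqP; lia.
apply: leq_trans (dimvS sub) _.
apply: leq_trans (dimv_add_leqif _ _).1 _.
by rewrite leq_add2l (leq_trans (dim_span _)) // size_map size_iota.
Qed.

End S.

Theorem mainTheorem5 (N : nat) : (1 <= N)%N -> dimZF N = (N - N./2)%N.
Proof.
move=> hN; have h1 := dim_lower hN; have h2 := dim_upper hN.
rewrite /dimZF; lia.
Qed.
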